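(* Let $\Delta \subset \mathbb{R}^2$ be a convex compact domain with piecewise-linear boundary, let $\chi$ be a finite set of nodes in $\Delta$ containing the fence nodes $\chi_f$, let $\chi_{int} = \chi \setminus \chi_f$, let $\mathcal{R}$ be the 2-skeleton of the Rips complex of $\chi$ with parameter $r_b > 0$, and let $\mathcal{F} \subseteq \mathcal{R}$ be the fence subcomplex. Assume that $(\mathcal{R},\mathcal{F})$ passes the de Silva–Ghrist criterion and that $H_2(\mathcal{R}) = 0$. Let $w \in \chi_{int}$ and let $\mathcal{R}_w$ be the maximal subcomplex of $\mathcal{R}$ not containing the vertex $w$. Then $(\mathcal{R}_w,\mathcal{F})$ passes the de Silva–Ghrist criterion if and only if $H_1(\mathrm{Lk}(w)) = 0$, where $\mathrm{Lk}(w)$ is the link of $w$ in $\mathcal{R}$.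
   Context: The fence nodes $\chi_f$ are the vertices of $\partial\Delta$, cyclically ordered, with cyclically consecutive fence nodes at distance less than $r_b$. The Rips complex has a simplex for every nonempty subset of $\chi$ whose points are pairwise at distance $< r_b$; $\mathcal{R}$ is its 2-skeleton (simplices of dimension $\le 2$). The fence $\mathcal{F}$ is the subcomplex consisting of the fence nodes and the edges joining cyclically consecutive fence nodes. Homology is with $\mathbb{Z}_2$ coefficients. For a subcomplex $\mathcal{K} \supseteq \mathcal{F}$, a class in $H_2(\mathcal{K},\mathcal{F})$ is fundamental if its image under the connecting homomorphism $H_2(\mathcal{K},\mathcal{F}) \to H_1(\mathcal{F})$ is nonzero, and $(\mathcal{K},\mathcal{F})$ passes the de Silva–Ghrist criterion if such a class exists. The link of a vertex $w$ in a simplicial complex $X$ is $\mathrm{Lk}(w,X) = \{\sigma \in X : w \notin \sigma,\ \sigma \cup \{w\} \in X\}$. *)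

(* Defs.v *)
From HB Require Import structures.
From mathcomp Require Import all_boot all_order all_algebra.
From mathcomp Require Import all_classical all_reals all_analysis.
Set Implicit Arguments. Unset Strict Implicit. Unset Printing Implicit Defensive.
Import Order.TTheory GRing.Theory Num.Theory.
Import numFieldTopology.Exports numFieldNormedType.Exports.
Local Open Scope classical_set_scope.
Local Open Scope ring_scope.

Notation pt R := (R * R)%type.
Section Geometry.
Variable R : realType.
Local Notation pt := (R * R)%type.

Definition eucl_dist (p q : pt) : R :=
  Num.sqrt ((p.1 - q.1) ^+ 2 + (p.2 - q.2) ^+ 2).

Definition lincomb (a b : pt) (t : R) : pt :=
  ((1 - t) * a.1 + t * b.1, (1 - t) * a.2 + t * b.2).

Definition pseg (a b : pt) : set pt :=
  [set p | exists t : R, 0 <= t <= 1 /\ p = lincomb a b t].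

Definition convex_pl (D : set pt) : Prop :=
  forall a b t, D a -> D b -> 0 <= t <= 1 -> D (lincomb a b t).

Definition bdry_set (D : set pt) : set pt := closure D `\` interior D.
End Geometry.
Local Close Scope classical_set_scope.

(* A (finite abstract) simplicial complex on the vertex type V is a set of
   simplices {set {set V}}; a k-simplex has k+1 vertices.  A Z_2 k-zchain is
   a set of k-simplices (coefficient 1 on the simplices it contains). *)
Section Homology.
Variable V : finType.
Implicit Types (K : {set {set V}}) (c : {set {set V}}).

Definition zchain K (k : nat) c : bool :=
  (c \subset K) && [forall s in c, #|s| == k.+1].

Definition bd (k : nat) c : {set {set V}} :=
  [set t : {set V} | (#|t| == k) &&
     odd #|[set s in c | (#|s| == k.+1) && (t \subset s)]|].

Definition zcycle K (k : nat) c : bool := zchain K k c && (bd k c == finset.set0).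

Definition zboundary K (k : nat) c : Prop :=
  exists d, zchain K k.+1 d /\ bd k.+1 d = c.

Definition H_trivial K (k : nat) : Prop :=
  forall c, zcycle K k c -> zboundary K k c.

Definition rel_cycle2 K F c : bool := zchain K 2 c && zchain F 1 (bd 2 c).

(* The connecting homomorphism H_2(K,F) -> H_1(F) sends the class of a
   relative 2-zcycle c to the class of its zboundary in H_1(F); it is nonzero
   iff bd c is not a zboundary in F.  (K,F) passes the de Silva--Ghrist
   criterion iff some class of H_2(K,F) has nonzero image. *)
Definition dSG_criterion K F : Prop :=
  exists c, rel_cycle2 K F c /\ ~ zboundary F 1 (bd 2 c).

Definition delete_vertex K (w : V) : {set {set V}} := [set s in K | w \notin s].

Definition vlink K (w : V) : {set {set V}} :=
  [set s in K | (w \notin s) && ((w |: s) \in K)].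
End Homology.

Section Rips.
Variables (R : realType) (V : finType) (pos : V -> pt R) (rb : R).

Definition rips2 : {set {set V}} :=
  [set s : {set V} | (s != finset.set0) && (#|s| <= 3)%N
     && [forall x in s, forall y in s, eucl_dist (pos x) (pos y) < rb]].

Definition fence (n : nat) (f : 'I_n -> V) : {set {set V}} :=
  [set [set f i] | i : 'I_n] :|: [set [set f i; f (ordS i)] | i : 'I_n].
End Rips.

(* Main.v *)
Require Import Defs.
From HB Require Import structures.
From mathcomp Require Import all_boot all_order all_algebra.
From mathcomp Require Import all_classical all_reals all_analysis.
From mathcomp Require Import ring lra zify.
From Stdlib Require Import Lia.
Import Order.TTheory GRing.Theory Num.Theory.
Import numFieldTopology.Exports numFieldNormedType.Exports.
Set Implicit Arguments. Unset Strict Implicit. Unset Printing Implicit Defensive.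

Section Comb.
Variable V : finType.
Local Open Scope nat_scope.

Lemma odd_sumb (I : Type) (r : seq I) (P : pred I) (F : I -> nat) :
  odd (\sum_(i <- r | P i) F i) = \big[addb/false]_(i <- r | P i) odd (F i).
Proof. exact: (big_morph odd oddD). Qed.

Lemma card3P (T : {set V}) : #|T| = 3 ->
  exists a b x, [/\ a != b, a != x, b != x & T = [set a; b; x]].
Proof.
move=> hT. have : 0 < #|T| by rewrite hT.
case/card_gt0P => a aT.
have : #|T :\ a| == 2 by move: hT; rewrite (cardsD1 a T) aT add1n => -[->].
case/cards2P => b [x [bx e]].
have hb : b \in T :\ a by rewrite e !inE eqxx.
have hx : x \in T :\ a by rewrite e !inE eqxx orbT.
move: hb hx; rewrite !inE => /andP [ba _] /andP [xa _].
exists a, b, x; split => //; first by rewrite eq_sym.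
  by rewrite eq_sym.
apply/setP => y; rewrite !inE.
case: (eqVneq y a) => [->|ya] /=; first by rewrite aT.
have : (y \in T :\ a) = (y \in T) by rewrite !inE ya.
by rewrite e !inE => <-.
Qed.

Lemma in3P (a b x y : V) : y \in [set a; b; x] -> [\/ y = a, y = b | y = x].
Proof. by rewrite !inE => /orP [/orP [] /eqP|/eqP]; [apply: Or31|apply: Or32|apply: Or33]. Qed.

Lemma set2C (y z : V) : [set y; z] = [set z; y].
Proof. by apply/setP => u; rewrite !inE orbC. Qed.

Lemma two_sub (a b x : V) (e : {set V}) : a != b -> a != x -> b != x ->
  ((#|e| == 2) && (e \subset [set a; b; x])) =
  [|| e == [set a; b], e == [set a; x] | e == [set b; x]].
Proof.
move=> ab ax bx; apply/idP/idP.
  case/andP => /cards2P [y [z [yz ->]]] /fintype.subsetP hs.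
  have hy' : y \in [set a; b; x] by apply: hs; rewrite !inE eqxx.
  have hz' : z \in [set a; b; x] by apply: hs; rewrite !inE eqxx orbT.
  move: yz; case/in3P: hy' => ->; case/in3P: hz' => ->; rewrite ?eqxx // => _.
  all: try by rewrite ?(set2C b a) ?(set2C x a) ?(set2C x b) ?eqxx ?orbT ?orTb ?orbT.
case/orP => [|/orP []] /eqP ->; rewrite cards2 ?ab ?ax ?bx /=;
  by apply/fintype.subsetP => y; rewrite !inE => /orP [] ->; rewrite ?orbT.
Qed.

Lemma sum_two_sub (a b x : V) (g : {set V} -> nat) : a != b -> a != x -> b != x ->
  \sum_(e : {set V} | (#|e| == 2) && (e \subset [set a; b; x])) g e =
  g [set a; b] + g [set a; x] + g [set b; x].
Proof.
move=> ab ax bx.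
have d1 : [set a; b] != [set a; x].
  apply/negP => /eqP /setP /(_ b); rewrite !inE eqxx orbT eq_sym (negbTE ab) /=.
  by rewrite (negbTE bx).
have d2 : [set a; b] != [set b; x].
  apply/negP => /eqP /setP /(_ a); rewrite !inE eqxx /= (negbTE ab) (negbTE ax).
  done.
have d3 : [set a; x] != [set b; x].
  apply/negP => /eqP /setP /(_ a); rewrite !inE eqxx /= (negbTE ab) (negbTE ax).
  done.
rewrite (eq_bigl (mem ([set a; b] |: ([set a; x] |: [set [set b; x]])))); last first.
  by move=> e; rewrite two_sub // !inE.
rewrite big_setU1 /=; last by rewrite !inE negb_or d1 d2.
rewrite big_setU1 /=; last by rewrite !inE d3.
by rewrite big_set1 addnA.
Qed.

Lemma dc (c : {set {set V}}) (g : {set V} -> bool) :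
  odd (\sum_(T in c | #|T| == 3) \sum_(e : {set V} | (#|e| == 2) && (e \subset T)) g e) =
  odd (\sum_(e in bd 2 c) g e).
Proof.
rewrite (exchange_big_dep (fun e : {set V} => #|e| == 2) (F := fun _ e => nat_of_bool (g e))); last by move=> i j _ /andP [].
rewrite /=.
pose N (e : {set V}) := #|[set s in c | (#|s| == 3) && (e \subset s)]|.
rewrite (eq_bigr (fun e => g e * N e)); last first.
  move=> e e2; rewrite sum_nat_const mulnC; congr (_ * _).
  apply: eq_card => s; rewrite !inE e2 /=.
  by rewrite unfold_in /= andbA.
rewrite !odd_sumb big_mkcond [RHS]big_mkcond /=.
apply: eq_bigr => e _; rewrite !inE.
case: (#|e| == 2) => //. rewrite oddM /N /=; by case: (g e); case: (odd #|_|).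
Qed.


Lemma sum_boolE (A : {set {set V}}) (g : {set V} -> bool) :
  \sum_(e in A) (g e : nat) = #|[set e in A | g e]|.
Proof.
rewrite -sum1_card big_mkcond [RHS]big_mkcond /=.
by apply: eq_bigr => e _; rewrite !inE; case: (e \in A); case: (g e).
Qed.

Lemma bd_vertex_even (c : {set {set V}}) (v : V) :
  (forall T, T \in c -> #|T| = 3) -> ~~ odd (\sum_(e in bd 2 c) (v \in e)).
Proof.
move=> h3; rewrite -dc odd_sumb big1 //= => T /andP [Tc _].
case: (card3P (h3 T Tc)) => a [b [x [ab ax bx ->]]].
rewrite sum_two_sub // !inE.
case Ea: (v == a); case Eb: (v == b); case Ex: (v == x) => //=.
- by rewrite -(eqP Ea) -(eqP Eb) eqxx in ab.
- by rewrite -(eqP Ea) -(eqP Eb) eqxx in ab.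
- by rewrite -(eqP Ea) -(eqP Ex) eqxx in ax.
- by rewrite -(eqP Eb) -(eqP Ex) eqxx in bx.
Qed.

Lemma tetra (Q : {set V}) : #|Q| = 4 -> bd 2 [set s in powerset Q | #|s| == 3] = finset.set0.
Proof.
move=> hQ; apply/setP => t; rewrite !inE.
case t2: (#|t| == 2) => //=.
case: (boolP (t \subset Q)) => tQ; last first.
  rewrite (_ : [set _ in _ | _] = finset.set0) ?cards0 //.
  apply/setP => s; rewrite !inE.
  apply/negP => /and3P [/andP [sQ _] _ ts].
  by rewrite (fintype.subset_trans ts sQ) in tQ.
rewrite (_ : [set _ in _ | _] = [set y |: t | y in Q :\: t]).
  rewrite card_in_imset; first by rewrite cardsDS // hQ (eqP t2).
  move=> y z; rewrite !inE => /andP [yt _] /andP [zt _] e.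
  have : y \in z |: t by rewrite -e !inE eqxx.
  by rewrite !inE (negbTE yt) orbF => /eqP.
apply/setP => s; rewrite !inE; apply/idP/imsetP.
  case/and3P => /andP [sQ /eqP s3] _ ts.
  have : #|s :\: t| == 1 by rewrite cardsDS // s3 (eqP t2).
  case/cards1P => y ey.
  have ys : y \in s :\: t by rewrite ey !inE.
  move: (ys); rewrite !inE => /andP [yt ys'].
  exists y; first by rewrite !inE yt (fintype.subsetP sQ).
  apply/setP => u; rewrite !inE.
  case: (boolP (u \in t)) => ut; first by rewrite orbT (fintype.subsetP ts).
  rewrite orbF; apply/idP/idP; last by move/eqP ->.
  move=> us; have : u \in s :\: t by rewrite !inE ut us.
  by rewrite ey inE.
move=> [y]; rewrite !inE => /andP [yt yQ] ->.
rewrite cardsU1 yt (eqP t2) /= andbT.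
apply/andP; split; last by apply/fintype.subsetP => u ut; rewrite !inE ut orbT.
apply/fintype.subsetP => u; rewrite !inE => /orP [/eqP ->//|]; exact: (fintype.subsetP tQ).
Qed.


Lemma iter_ordS n (i0 : 'I_n) k : val (iter k (@ordS n) i0) = (i0 + k) %% n.
Proof.
elim: k => [|k IH] /=; first by rewrite addn0 modn_small.
by rewrite IH -addn1 modnDml addn1 addnS.
Qed.

Lemma ord_reach n (i0 j : 'I_n) : exists k, iter k (@ordS n) i0 = j.
Proof.
exists (j + n - i0); apply: val_inj; rewrite iter_ordS.
have hi : i0 <= j + n by rewrite (leq_trans (ltnW (ltn_ord i0))) // leq_addl.
by rewrite addnBA // addKn modnDr modn_small.
Qed.

Lemma fence_all n (f : 'I_n -> V) (B : {set {set V}}) :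
  injective f ->
  (forall e, e \in B -> exists i, e = [set f i; f (ordS i)]) ->
  B != finset.set0 ->
  (forall v, ~~ odd (\sum_(e in B) (v \in e))) ->
  forall i, [set f i; f (ordS i)] \in B.
Proof.
move=> finj hB /set0Pn [e0 e0B] hev.
have step : forall i, [set f i; f (ordS i)] \in B -> [set f (ordS i); f (ordS (ordS i))] \in B.
  move=> i hi; apply/negPn/negP => hn.
  have := hev (f (ordS i)); rewrite sum_boolE.
  rewrite (_ : [set e in B | _] = [set [set f i; f (ordS i)]]) ?cards1 //.
  apply/setP => e; rewrite !inE; apply/idP/idP; last by move/eqP ->; rewrite hi !inE eqxx orbT.
  case/andP => eB; case: (hB e eB) => j ej; rewrite ej !inE => /orP [] /eqP /finj hj.
    by move: eB; rewrite ej -hj (negbTE hn).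
  by move/ordS_inj: hj => ->.
case: (hB e0 e0B) => i0 ei0; rewrite ei0 in e0B.
have hk : forall k, [set f (iter k (@ordS n) i0); f (ordS (iter k (@ordS n) i0))] \in B.
  by elim=> [//|k IH] /=; apply: step.
by move=> j; case: (ord_reach i0 j) => k <-.
Qed.


Lemma bd0 k : bd k (finset.set0 : {set {set V}}) = finset.set0.
Proof.
apply/setP => t; rewrite !inE.
rewrite (_ : [set s in finset.set0 | _] = finset.set0) ?cards0 ?andbF //.
by apply/setP => s; rewrite !inE.
Qed.

Lemma link_dir (K F c : {set {set V}}) (w : V) :
  (forall s t : {set V}, s \in K -> t \subset s -> t != finset.set0 -> t \in K) ->
  (forall s : {set V}, s \in K -> #|s| <= 3) ->
  (forall e : {set V}, e \in F -> w \notin e) ->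
  zchain K 2 c -> zchain F 1 (bd 2 c) ->
  H_trivial (vlink K w) 1 ->
  forall s, s \in c -> w \notin s.
Proof.
move=> Ksub K3 Fw /andP [/fintype.subsetP cK /forallP c3] /andP [/fintype.subsetP bF _] H.
pose E := [set s :\ w | s in [set s in c | w \in s]].
have Einj : {in [set s in c | w \in s] &, injective (fun s => s :\ w)}.
  move=> s1 s2; rewrite !inE => /andP [_ w1] /andP [_ w2] e.
  by rewrite -(finset.setD1K w1) -(finset.setD1K w2) e.
have hE : zcycle (vlink K w) 1 E.
  apply/andP; split.
    apply/andP; split.
      apply/fintype.subsetP => e /imsetP [s]; rewrite !inE => /andP [sc ws] ->.
      have s3 : #|s| = 3 by apply/eqP; have := c3 s; rewrite sc.
      have e2 : #|s :\ w| = 2 by move: s3; rewrite (cardsD1 w) ws => -[].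
      rewrite !inE eqxx /= finset.setD1K // (cK s sc) andbT.
      apply: (@Ksub s (s :\ w) (cK s sc)); first by apply/fintype.subsetP => u; rewrite !inE => /andP [].
      by apply/negP => /eqP e0; rewrite e0 cards0 in e2.
    apply/forallP => e; apply/implyP => /imsetP [s]; rewrite !inE => /andP [sc ws] ->.
    have s3 : #|s| = 3 by apply/eqP; have := c3 s; rewrite sc.
    have e2 : #|s :\ w| = 2 by move: s3; rewrite (cardsD1 w) ws => -[].
    by rewrite e2.
  apply/eqP/setP => t; rewrite !inE.
  case/boolP: (#|t| == 1) => //= /cards1P [v ->].
  case: (eqVneq v w) => [->|vw].
    rewrite (_ : [set _ in E | _] = finset.set0) ?cards0 //.
    apply/setP => e; rewrite !inE; apply/negP => /and3P [/imsetP [s _ ->] _].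
    by rewrite finset.sub1set !inE eqxx.
  rewrite (_ : [set _ in E | _] = (fun s => s :\ w) @: [set s in c | (#|s| == 3) && ([set w; v] \subset s)]).
    rewrite card_in_imset; last first.
      move=> s1 s2; rewrite !inE => /andP [c1 /andP [_ h1]] /andP [c2 /andP [_ h2]].
      have wsw : w \in [set w; v] by rewrite !inE eqxx.
      by apply: Einj; rewrite !inE ?c1 ?c2 /= ?(fintype.subsetP h1 _ wsw) ?(fintype.subsetP h2 _ wsw).
    apply/negP => hodd.
    have : [set w; v] \in bd 2 c by rewrite !inE cards2 (eq_sym w v) vw hodd.
    by move/bF/Fw; rewrite !inE eqxx.
  apply/setP => e; rewrite inE; apply/idP/imsetP.
    case/andP => /imsetP [s]; rewrite inE => /andP [sc ws] -> /andP [_].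
    rewrite finset.sub1set !inE => /andP [_ vs].
    exists s => //; rewrite !inE sc.
    have := c3 s; rewrite sc /= => -> /=.
    by apply/fintype.subsetP => u; rewrite !inE => /orP [] /eqP ->.
  case=> s; rewrite !inE => /andP [sc /andP [/eqP s3 /fintype.subsetP sub]] ->.
  have ws : w \in s by apply: sub; rewrite !inE eqxx.
  have vs : v \in s by apply: sub; rewrite !inE eqxx orbT.
  apply/andP; split; first by apply/imsetP; exists s => //; rewrite !inE sc ws.
  have e2 : #|s :\ w| = 2 by move: s3; rewrite (cardsD1 w) ws => -[].
  by rewrite e2 eqxx finset.sub1set !inE vw vs.
case: (H E hE) => d [/andP [/fintype.subsetP dL /forallP d3] dE].
have d0 : d = finset.set0.
  apply/setP => s; rewrite inE; apply/negP => sd.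
  have := dL s sd; rewrite !inE => /and3P [_ ws wK].
  have := K3 _ wK; rewrite cardsU1 ws.
  by move: (d3 s); rewrite sd /= => /eqP ->.
rewrite d0 bd0 in dE.
move=> s sc; apply/negP => ws.
have : s :\ w \in E by apply/imsetP; exists s => //; rewrite !inE sc ws.
by rewrite -dE inE.
Qed.

End Comb.

Section RipsL.
Local Open Scope ring_scope.
Variables (R : realType) (V : finType) (pos : V -> pt R) (rb : R).
Hypothesis rb0 : 0 < rb.

Definition d2 (p q : pt R) : R := (p.1 - q.1) ^+ 2 + (p.2 - q.2) ^+ 2.

Lemma d2_ge0 (p q : pt R) : 0 <= d2 p q.
Proof. by rewrite /d2 addr_ge0 ?sqr_ge0. Qed.

Lemma d2C (p q : pt R) : d2 p q = d2 q p.
Proof. by rewrite /d2 -(sqrrN (p.1 - q.1)) -(sqrrN (p.2 - q.2)) !opprB. Qed.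

Lemma distE (p q : pt R) : (eucl_dist p q < rb) = (d2 p q < rb ^+ 2).
Proof.
rewrite /eucl_dist -/(d2 p q) -{1}(ger0_norm (ltW rb0)) -sqrtr_sqr ltr_sqrt //.
by rewrite exprn_gt0.
Qed.

Lemma dist_sym (p q : pt R) : eucl_dist p q = eucl_dist q p.
Proof. by rewrite /eucl_dist -/(d2 p q) -/(d2 q p) d2C. Qed.

Lemma dist_refl (p : pt R) : eucl_dist p p < rb.
Proof. by rewrite /eucl_dist !subrr expr0n /= addr0 sqrtr0. Qed.

Local Notation K := (rips2 pos rb).

Lemma ripsP (s : {set V}) : reflect
  [/\ s != finset.set0, (#|s| <= 3)%N & forall x y, x \in s -> y \in s -> eucl_dist (pos x) (pos y) < rb]
  (s \in K).
Proof.
rewrite inE; apply: (iffP idP).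
  case/andP => /andP [s0 s3] /forallP h; split => // x y xs ys.
  by move: (h x); rewrite xs /= => /forallP /(_ y); rewrite ys.
case=> s0 s3 h; rewrite s0 s3 /=; apply/forallP => x; apply/implyP => xs.
by apply/forallP => y; apply/implyP => ys; apply: h.
Qed.

Lemma rips_sub (s t : {set V}) : s \in K -> t \subset s -> t != finset.set0 -> t \in K.
Proof.
case/ripsP => _ s3 h ts t0; apply/ripsP; split => //.
  exact: leq_trans (subset_leq_card ts) s3.
by move=> x y xt yt; apply: h; apply: (fintype.subsetP ts).
Qed.

Lemma rips3 (s : {set V}) : s \in K -> (#|s| <= 3)%N.
Proof. by case/ripsP. Qed.

Lemma no_clique4 (w : V) (T : {set V}) :
  H_trivial K 2 -> T \in K -> #|T| = 3 -> w \notin T ->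
  (forall v, v \in T -> eucl_dist (pos w) (pos v) < rb) -> False.
Proof.
move=> H TK T3 wT hw.
pose Q := w |: T.
have Q4 : #|Q| = 4 by rewrite cardsU1 wT T3.
pose Z := [set s in powerset Q | #|s| == 3].
have hZ : zcycle K 2 Z.
  apply/andP; split; last by rewrite tetra.
  apply/andP; split; last by apply/forallP => s; apply/implyP; rewrite !inE => /andP [].
  apply/fintype.subsetP => s sZ.
  have : (s \subset Q) && (#|s| == 3) by move: sZ; rewrite !inE.
  case/andP => sQ s3.
  apply/ripsP; split; first by rewrite -cards_eq0 (eqP s3).
    by rewrite (eqP s3).
  have hQ : forall x y, x \in Q -> y \in Q -> eucl_dist (pos x) (pos y) < rb.
    move=> x y; rewrite !inE => /orP [/eqP ->|xT] /orP [/eqP ->|yT].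
    - exact: dist_refl.
    - exact: hw.
    - by rewrite dist_sym; apply: hw.
    - by case/ripsP: TK => _ _; apply.
  by move=> x y xs ys; apply: hQ; apply: (fintype.subsetP sQ).
case: (H Z hZ) => d [/andP [/fintype.subsetP dK /forallP d3] dZ].
have d0 : d = finset.set0.
  apply/setP => s; rewrite inE; apply/negP => sd.
  have := rips3 (dK s sd).
  by move: (d3 s); rewrite sd /= => /eqP ->.
rewrite d0 bd0 in dZ.
have : T \in Z by rewrite !inE T3 eqxx andbT; apply/fintype.subsetP => u uT; rewrite !inE uT orbT.
by rewrite -dZ inE.
Qed.

End RipsL.

Section Geo.
Local Open Scope ring_scope.
Variables (R : realType) (p : pt R) (t : R).

Definition uu (a : pt R) : R := a.1 - p.1.
Definition hh (a : pt R) : R := (a.2 - p.2) - t * (a.1 - p.1).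
Definition OO (a b : pt R) : R := uu a * hh b - hh a * uu b.
Definition cr (a b : pt R) : bool :=
  ((0 < hh a) != (0 < hh b)) && (0 < OO a b * (hh b - hh a)).

Lemma cr_sym (a b : pt R) : cr a b = cr b a.
Proof.
rewrite /cr eq_sym; congr (_ && (0 < _)); rewrite /OO; ring.
Qed.

Lemma cr_refl (a : pt R) : cr a a = false.
Proof. by rewrite /cr eqxx. Qed.

Lemma uu_lin (a b : pt R) (l : R) : uu (lincomb a b l) = (1 - l) * uu a + l * uu b.
Proof. rewrite /uu /lincomb /=; ring. Qed.

Lemma hh_lin (a b : pt R) (l : R) : hh (lincomb a b l) = (1 - l) * hh a + l * hh b.
Proof. rewrite /hh /lincomb /=; ring. Qed.

Lemma d2_lin (a b v : pt R) (l r : R) : 0 <= l <= 1 -> d2 a v < r -> d2 b v < r ->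
  d2 (lincomb a b l) v < r.
Proof.
case/andP => l0 l1 ha hb.
have conv : d2 (lincomb a b l) v <= (1 - l) * d2 a v + l * d2 b v.
  rewrite /d2 /lincomb /= -subr_ge0.
  have -> : (1 - l) * ((a.1 - v.1) ^+ 2 + (a.2 - v.2) ^+ 2) +
     l * ((b.1 - v.1) ^+ 2 + (b.2 - v.2) ^+ 2) -
    (((1 - l) * a.1 + l * b.1 - v.1) ^+ 2 + ((1 - l) * a.2 + l * b.2 - v.2) ^+ 2)
    = l * (1 - l) * ((a.1 - b.1) ^+ 2 + (a.2 - b.2) ^+ 2) by ring.
  by rewrite !mulr_ge0 ?subr_ge0 ?addr_ge0 ?sqr_ge0.
apply: (le_lt_trans conv).
have h1 : 0 <= (1 - l) * (r - d2 a v) by apply: mulr_ge0; lra.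
case: (leP l 0) => hl.
  have -> : l = 0 by lra.
  lra.
have h2 : 0 < l * (r - d2 b v) by apply: mulr_gt0; lra.
lra.
Qed.


Lemma neg_prod (x y : R) : x != 0 -> y != 0 -> (x * y < 0) = ((0 < x) != (0 < y)).
Proof.
move=> x0 y0.
have [hx|hx'] : 0 < x \/ x < 0.
  by case: (ltP 0 x) => h; [left|right; rewrite lt_neqAle x0 h].
- have [hy|hy'] : 0 < y \/ y < 0.
    by case: (ltP 0 y) => h; [left|right; rewrite lt_neqAle y0 h].
  + rewrite hx hy /=; apply/negbTE; rewrite -leNgt; nra.
  + rewrite hx (ltNge 0 y) (ltW hy') /=; apply/idP; nra.
- have [hy|hy'] : 0 < y \/ y < 0.
    by case: (ltP 0 y) => h; [left|right; rewrite lt_neqAle y0 h].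
  + rewrite hy (ltNge 0 x) (ltW hx') /=; apply/idP; nra.
  + rewrite (ltNge 0 x) (ltW hx') (ltNge 0 y) (ltW hy') /=; apply/negbTE; rewrite -leNgt; nra.
Qed.

Lemma uu_lin_id (a b : pt R) l :
  uu (lincomb a b l) * (hh b - hh a) - OO a b = (uu b - uu a) * hh (lincomb a b l).
Proof. rewrite uu_lin hh_lin /OO; ring. Qed.

Lemma cross_pt (a b : pt R) : hh a * hh b < 0 ->
  exists l, 0 <= l <= 1 /\ hh (lincomb a b l) = 0.
Proof.
move=> hab.
have D0 : hh a - hh b != 0.
  apply/negP => /eqP e; have : hh a = hh b by lra.
  move=> e'; rewrite e' in hab; have := sqr_ge0 (hh b); rewrite expr2; lra.
exists (hh a / (hh a - hh b)); split; last by rewrite hh_lin; field.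
have [ha|ha] : 0 < hh a \/ hh a < 0.
  case: (ltP 0 (hh a)) => h; [by left|right].
  rewrite lt_neqAle h andbT; apply/negP => /eqP e; rewrite e mul0r ltxx in hab.
  done.
- have hb : hh b < 0 by rewrite -(pmulr_rlt0 _ ha).
  have Dp : 0 < hh a - hh b by lra.
  have l0 : 0 <= hh a / (hh a - hh b) by rewrite divr_ge0 // ltW.
  have l1 : hh a / (hh a - hh b) <= 1 by rewrite ler_pdivrMr // mul1r; lra.
  by rewrite l0 l1.
- have hb : 0 < hh b by rewrite -(nmulr_rlt0 _ ha).
  have Dn : hh a - hh b < 0 by lra.
  have -> : hh a / (hh a - hh b) = (- hh a) / (- (hh a - hh b)) by rewrite -mulrNN -invrN.
  have Dp : 0 < - (hh a - hh b) by lra.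
  have l0 : 0 <= - hh a / (- (hh a - hh b)) by rewrite divr_ge0 // ltW // oppr_gt0.
  have l1 : - hh a / (- (hh a - hh b)) <= 1 by rewrite ler_pdivrMr // mul1r; lra.
  by rewrite l0 l1.
Qed.

Lemma cr_val (a b : pt R) l : hh a * hh b < 0 -> hh (lincomb a b l) = 0 ->
  cr a b = (0 < uu (lincomb a b l)).
Proof.
move=> hab h0.
have D0 : hh b - hh a != 0.
  apply/negP => /eqP e; have : hh a = hh b by lra.
  move=> e'; rewrite e' in hab; have := sqr_ge0 (hh b); rewrite expr2; lra.
have := uu_lin_id a b l; rewrite h0 mulr0 => /eqP; rewrite subr_eq0 => /eqP eO.
rewrite /cr -neg_prod; last 2 first.
- by apply/negP => /eqP e; rewrite e mul0r ltxx in hab.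
- by apply/negP => /eqP e; rewrite e mulr0 ltxx in hab.
rewrite hab /= -eO -mulrA -expr2 pmulr_lgt0 //.
by rewrite exprn_even_gt0.
Qed.

Lemma cr_pt (a b : pt R) : hh a != 0 -> hh b != 0 ->
  (exists l, 0 <= l <= 1 /\ hh (lincomb a b l) = 0 /\ 0 < uu (lincomb a b l)) -> cr a b.
Proof.
move=> a0 b0 [l [/andP [l0 l1] [h0 u0]]].
have hab : hh a * hh b < 0.
  rewrite hh_lin in h0.
  rewrite neg_prod //; apply/negP => /eqP es.
  have sa : 0 < hh a \/ hh a < 0.
    case: (ltP 0 (hh a)) => h; [by left|right; by rewrite lt_neqAle a0 h].
  have sb : 0 < hh b \/ hh b < 0.
    case: (ltP 0 (hh b)) => h; [by left|right; by rewrite lt_neqAle b0 h].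
  case: sa => ha; case: sb => hb.
  - have h1 : 0 <= (1 - l) * hh a by apply: mulr_ge0; lra.
    have h2 : 0 <= l * hh b by apply: mulr_ge0; lra.
    have h3 : (1 - l) * hh a + l * hh b >= Num.min (hh a) (hh b).
      case: (leP (hh a) (hh b)) => hab; nra.
    have : 0 < Num.min (hh a) (hh b) by rewrite lt_min ha hb.
    lra.
  - by move: es; rewrite ha (ltNge 0 (hh b)) (ltW hb).
  - by move: es; rewrite hb (ltNge 0 (hh a)) (ltW ha).
  - have h3 : (1 - l) * hh a + l * hh b <= Num.max (hh a) (hh b).
      case: (leP (hh a) (hh b)) => hab; nra.
    have : Num.max (hh a) (hh b) < 0 by rewrite gt_max ha hb.
    lra.
by rewrite (cr_val hab h0).
Qed.

Lemma between (q1 q2 : pt R) : hh q1 = 0 -> hh q2 = 0 -> uu q2 <= 0 < uu q1 ->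
  exists l, 0 <= l <= 1 /\ p = lincomb q2 q1 l.
Proof.
move=> h1 h2 /andP [u2 u1].
have D : 0 < uu q1 - uu q2 by lra.
exists (- uu q2 / (uu q1 - uu q2)); split.
  have l0 : 0 <= - uu q2 / (uu q1 - uu q2) by rewrite divr_ge0 // ?oppr_ge0 // ltW.
  have l1 : - uu q2 / (uu q1 - uu q2) <= 1 by rewrite ler_pdivrMr // mul1r; lra.
  by rewrite l0 l1.
move: h1 h2; rewrite /hh /uu /lincomb => h1 h2 /=.
have e1 : q1.2 = p.2 + t * (q1.1 - p.1) by lra.
have e2 : q2.2 = p.2 + t * (q2.1 - p.1) by lra.
move: D; rewrite /uu => D.
rewrite (surjective_pairing p) /=; congr (_, _).
  field; lra.
rewrite e1 e2; field; lra.
Qed.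

Lemma tri_core (N : pt R -> Prop) (A B X : pt R) :
  (forall q1 q2 l, 0 <= l <= 1 -> N q1 -> N q2 -> N (lincomb q1 q2 l)) ->
  N A -> N B -> N X -> hh A * hh X < 0 -> hh B * hh X < 0 ->
  cr A X != cr B X -> N p.
Proof.
move=> Nl NA NB NX hA hB.
case: (cross_pt hA) => la [la1 ha0].
case: (cross_pt hB) => lb [lb1 hb0].
rewrite (cr_val hA ha0) (cr_val hB hb0).
have Na := Nl _ _ _ la1 NA NX; have Nb := Nl _ _ _ lb1 NB NX.
case: (ltP 0 (uu (lincomb A X la))) => ua; case: (ltP 0 (uu (lincomb B X lb))) => ub //= _.
  case: (@between (lincomb A X la) (lincomb B X lb)) => //; first by rewrite ub ua.
  by move=> l [l1 ->]; apply: Nl.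
case: (@between (lincomb B X lb) (lincomb A X la)) => //; first by rewrite ub ua.
by move=> l [l1 ->]; apply: Nl.
Qed.

Lemma tri_near (N : pt R -> Prop) (A B X : pt R) :
  (forall q1 q2 l, 0 <= l <= 1 -> N q1 -> N q2 -> N (lincomb q1 q2 l)) ->
  N A -> N B -> N X -> hh A != 0 -> hh B != 0 -> hh X != 0 ->
  odd (cr A B + cr A X + cr B X) -> N p.
Proof.
move=> Nl NA NB NX a0 b0 x0.
have ncr : forall a b, (0 < hh a) = (0 < hh b) -> cr a b = false.
  by move=> a b e; rewrite /cr e eqxx.
case: (boolP ((0 < hh A) == (0 < hh B))) => [/eqP eAB | nAB].
  rewrite (ncr _ _ eAB).
  case: (boolP ((0 < hh X) == (0 < hh A))) => [/eqP eXA | nXA].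
    rewrite (ncr A X) 1?(ncr B X) //; by rewrite -eAB eXA.
  move=> hodd; apply: (@tri_core N A B X) => //.
  - by rewrite neg_prod // eq_sym.
  - by rewrite neg_prod // -eAB eq_sym.
  - by apply/negP => /eqP e; rewrite e /= addnn odd_double in hodd.
case: (boolP ((0 < hh X) == (0 < hh A))) => [/eqP eXA | nXA].
  rewrite (ncr A X) ?eXA // addn0 => hodd.
  apply: (@tri_core N A X B) => //.
  - by rewrite neg_prod.
  - by rewrite neg_prod // eXA.
  - rewrite (cr_sym X B); apply/negP => /eqP e; rewrite e addnn odd_double in hodd.
    done.
have eXB : (0 < hh X) = (0 < hh B).
  move: nAB nXA; case: (0 < hh X); case: (0 < hh A); case: (0 < hh B) => //.
rewrite (ncr B X) ?eXB // addn0 => hodd.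
apply: (@tri_core N B X A) => //.
- by rewrite neg_prod // eq_sym.
- by rewrite neg_prod // eXB eq_sym.
- rewrite (cr_sym B A) (cr_sym X A); apply/negP => /eqP e; rewrite e addnn odd_double in hodd.
  done.
Qed.

End Geo.

Section TopoWrap.
Local Open Scope classical_set_scope.
Local Open Scope ring_scope.


Variable R : realType.

Lemma cl_compact (A : set (pt R)) : compact A -> closure A = A.
Proof. move=> cA. have := compact_closed (@norm_hausdorff _ (R*R)%type) cA. by move/closure_id => <-. Qed.

Lemma bnd_compact (A : set (pt R)) : compact A -> exists2 M, 0 < M & forall x, A x -> `|x.1| < M.
Proof.
move=> /compact_bounded /ex_strict_bound_gt0 [M M0 hM]; exists M => // x Ax.
by have := hM x Ax => /= hx; apply: le_lt_trans hx; rewrite prod_normE le_max lexx.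
Qed.

Lemma int_ball (A : set (pt R)) x : interior A x <->
  exists2 e, 0 < e & forall y, `|x.1 - y.1| < e -> `|x.2 - y.2| < e -> A y.
Proof.
rewrite /interior nbhs_ballP; split => -[e e0 h]; exists e => // y.
  by move=> h1 h2; apply: h; split.
by case=> h1 h2; apply: h.
Qed.

Lemma conv_int (A : set (pt R)) a b l : convex_pl A ->
  interior A a -> A b -> 0 <= l < 1 -> interior A (lincomb a b l).
Proof.
move=> cA /int_ball [e e0 he] Ab /andP [l0 l1].
apply/int_ball; exists ((1 - l) * e); first by apply: mulr_gt0 => //; lra.
move=> y h1 h2.
have l1' : 0 < 1 - l by lra.
pose a' := ((y.1 - l * b.1) / (1 - l), (y.2 - l * b.2) / (1 - l)).
have -> : y = lincomb a' b l.
  rewrite /lincomb /a' /= (surjective_pairing y); congr (_, _); field; lra.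
apply: cA => //; last by rewrite l0 ltW.
apply: he.
- rewrite /a' /=.
  have -> : a.1 - (y.1 - l * b.1) / (1 - l) = ((lincomb a b l).1 - y.1) / (1 - l).
    rewrite /lincomb /=; field; lra.
  rewrite normrM normfV (gtr0_norm l1') ltr_pdivrMr //; by rewrite mulrC.
- rewrite /a' /=.
  have -> : a.2 - (y.2 - l * b.2) / (1 - l) = ((lincomb a b l).2 - y.2) / (1 - l).
    rewrite /lincomb /=; field; lra.
  rewrite normrM normfV (gtr0_norm l1') ltr_pdivrMr //; by rewrite mulrC.
Qed.


Definition ray (p : pt R) (t s : R) : pt R := (p.1 + s, p.2 + t * s).

Lemma ray_hh p t s : hh p t (ray p t s) = 0.
Proof. rewrite /hh /ray /=; ring. Qed.

Lemma ray_uu p t s : uu p (ray p t s) = s.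
Proof. rewrite /uu /ray /=; ring. Qed.

Lemma ray_eq p t q : hh p t q = 0 -> q = ray p t (uu p q).
Proof.
rewrite /hh /ray /uu => h; rewrite [LHS]surjective_pairing; congr (_, _); lra.
Qed.

Lemma ray0 p t : ray p t 0 = p.
Proof. by rewrite /ray addr0 mulr0 addr0 -surjective_pairing. Qed.

Lemma fence_cross (Delta : set (pt R)) n (P : 'I_n -> pt R) (p : pt R) (t : R) :
 convex_pl Delta -> compact Delta ->
 bdry_set Delta = \bigcup_(i in [set: 'I_n]) pseg (P i) (P (ordS i)) ->
 (forall i j : 'I_n, i != j -> pseg (P i) (P (ordS i)) `&` pseg (P j) (P (ordS j))
     = if j == ordS i then [set P j] else if i == ordS j then [set P i] else set0) ->
 Delta p -> (forall i, ~ pseg (P i) (P (ordS i)) p) ->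
 (forall i, hh p t (P i) != 0) ->
 exists i0, forall i, cr p t (P i) (P (ordS i)) = (i == i0).
Proof.
move=> cvD cD hB hI Dp hp h0.
have clD := cl_compact cD.
have segB : forall i q, pseg (P i) (P (ordS i)) q -> bdry_set Delta q.
  by move=> i q hq; rewrite hB; exists i.
have segD : forall i q, pseg (P i) (P (ordS i)) q -> Delta q.
  by move=> i q /segB [+ _]; rewrite clD.
have segNI : forall i q, pseg (P i) (P (ordS i)) q -> ~ interior Delta q.
  by move=> i q /segB [].
have pint : interior Delta p.
  case: (pselect (interior Delta p)) => // np.
  have : bdry_set Delta p by split => //; rewrite clD.
  by rewrite hB => -[i _ /hp].
have crpt : forall i, cr p t (P i) (P (ordS i)) ->
    exists q, [/\ pseg (P i) (P (ordS i)) q, hh p t q = 0 & 0 < uu p q].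
  move=> i hc.
  have hab : hh p t (P i) * hh p t (P (ordS i)) < 0.
    by rewrite neg_prod //; case/andP: hc.
  case: (cross_pt hab) => l [l01 hl].
  exists (lincomb (P i) (P (ordS i)) l); split => //; first by exists l.
  by rewrite -(cr_val hab hl).
have ptcr : forall i q, pseg (P i) (P (ordS i)) q -> hh p t q = 0 -> 0 < uu p q ->
    cr p t (P i) (P (ordS i)).
  by move=> i q [l [l01 ->]] hq uq; apply: cr_pt => //; exists l.
have key : forall ia ib qa qb, pseg (P ia) (P (ordS ia)) qa -> pseg (P ib) (P (ordS ib)) qb ->
    hh p t qa = 0 -> hh p t qb = 0 -> 0 < uu p qa -> uu p qa < uu p qb -> False.
  move=> ia ib qa qb sa sb ha hb ua uab.
  have ub : 0 < uu p qb by apply: lt_trans uab.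
  have e : qa = lincomb p qb (uu p qa / uu p qb).
    have ea := ray_eq ha; have eb := ray_eq hb; move: ea eb ua ub.
    generalize (uu p qa) (uu p qb) => xa xb -> -> xa0 xb0.
    by rewrite /ray /lincomb /=; congr (_, _); field; rewrite gt_eqF.
  apply: (segNI _ _ sa); rewrite e; apply: conv_int => //; first exact: segD sb.
  rewrite divr_ge0 ?ltW //= ltr_pdivrMr // mul1r //.
have uniq : forall i j, cr p t (P i) (P (ordS i)) -> cr p t (P j) (P (ordS j)) -> i = j.
  move=> i j ci cj; case: (eqVneq i j) => // nij.
  case: (crpt i ci) => qi [si hi ui]; case: (crpt j cj) => qj [sj hj uj].
  case: (ltgtP (uu p qi) (uu p qj)) => c.
  - by case: (key _ _ _ _ si sj hi hj ui c).
  - by case: (key _ _ _ _ sj si hj hi uj c).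
  have eq : qi = qj by rewrite (ray_eq hi) (ray_eq hj) c.
  have : (pseg (P i) (P (ordS i)) `&` pseg (P j) (P (ordS j))) qi by split => //; rewrite eq.
  rewrite hI //; case: (j == ordS i) => [|]; last case: (i == ordS j).
  - by move=> /= eP; rewrite eP in hi; move: (h0 j); rewrite hi eqxx.
  - by move=> /= eP; rewrite eP in hi; move: (h0 i); rewrite hi eqxx.
  - by [].
case: (bnd_compact cD) => M M0 hM.
pose S := [set s : R | 0 <= s /\ Delta (ray p t s)].
have S0 : S 0 by split; rewrite ?ray0.
have Sub : forall s, S s -> s <= M + `|p.1|.
  move=> s [s0 Ds]; have := hM _ Ds; rewrite /ray /= => h.
  have h1 := ler_norm (p.1 + s); have h2 := ler_normr (- p.1) `|p.1|.
  have h3 : - p.1 <= `|p.1| by rewrite -normrN ler_norm.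
  lra.
have hS : has_sup S by split; [exists 0 | exists (M + `|p.1|) => s /Sub].
pose ss := sup S.
have ss0 : 0 <= ss by apply: sup_upper_bound.
have Dss : Delta (ray p t ss).
  rewrite -clD => B /nbhs_ballP [e e0 hBe].
  have d0 : 0 < e / (1 + `|t|) by rewrite divr_gt0 // ltr_pwDl.
  case: (sup_adherent d0 hS) => s Ss; rewrite -/ss => hs.
  have sle : s <= ss by apply: sup_upper_bound.
  exists (ray p t s); split; first by case: Ss.
  apply: hBe; rewrite /ball /= /ray /=.
  have hd : ss - s < e / (1 + `|t|) by lra.
  have t1 : 0 < 1 + `|t| by rewrite ltr_pwDl.
  have hd' : (ss - s) * (1 + `|t|) < e by rewrite -ltr_pdivlMr.
  suff : `|(p.1 + ss) - (p.1 + s)| < e /\ `|(p.2 + t * ss) - (p.2 + t * s)| < e by [].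
  split.
    have -> : (p.1 + ss) - (p.1 + s) = ss - s by ring.
    rewrite ger0_norm; last by lra.
    have := normr_ge0 t; nra.
  have -> : (p.2 + t * ss) - (p.2 + t * s) = t * (ss - s) by ring.
  rewrite normrM (ger0_norm (x := ss - s)); last by lra.
  have := normr_ge0 t; nra.
have NIss : ~ interior Delta (ray p t ss).
  case/int_ball => e e0 he.
  have t1 : 0 < 1 + `|t| by rewrite ltr_pwDl.
  pose d := e / (2 * (1 + `|t|)).
  have d0 : 0 < d by rewrite divr_gt0 // mulr_gt0.
  have hd : d * (2 * (1 + `|t|)) = e by rewrite /d mulfVK // gt_eqF // mulr_gt0.
  have : S (ss + d).
    split; first by lra.
    apply: he; rewrite /ray /=.
      have -> : (p.1 + ss) - (p.1 + (ss + d)) = - d by ring.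
      rewrite normrN ger0_norm; last by lra.
      have := normr_ge0 t; nra.
    have -> : (p.2 + t * ss) - (p.2 + t * (ss + d)) = - (t * d) by ring.
    rewrite normrN normrM (gtr0_norm d0).
    have := normr_ge0 t; nra.
  move/(sup_upper_bound hS); rewrite -/ss; lra.
have : bdry_set Delta (ray p t ss) by split => //; rewrite clD.
rewrite hB => -[i0 _ si0].
have ssp : 0 < ss.
  rewrite lt_neqAle ss0 andbT; apply/negP => /eqP e.
  by apply: (hp i0); rewrite -(ray0 p t) e.
have ci0 : cr p t (P i0) (P (ordS i0)) by apply: (ptcr i0 _ si0); rewrite ?ray_hh ?ray_uu.
exists i0 => i; apply/idP/idP; first by move/uniq /(_ ci0) ->.
by move/eqP ->.
Qed.



End TopoWrap.
Section Aux.
Local Open Scope ring_scope.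
Variables (R : realType) (V : finType) (pos : V -> pt R).

Definition crS (p : pt R) (t : R) (e : {set V}) : bool :=
  [exists y in e, exists z in e, cr p t (pos y) (pos z)].

Lemma crS2 p t (y z : V) : crS p t [set y; z] = cr p t (pos y) (pos z).
Proof.
apply/idP/idP.
  case/exists_inP => y'; rewrite !inE => /orP [] /eqP -> /exists_inP [z'];
   rewrite !inE => /orP [] /eqP ->; rewrite ?cr_refl // cr_sym //.
move=> h; apply/exists_inP; exists y; first by rewrite !inE eqxx.
by apply/exists_inP; exists z; first by rewrite !inE eqxx orbT.
Qed.

Lemma generic_t (p : pt R) : exists t, forall v, pos v != p -> hh p t (pos v) != 0.
Proof.
pose bad v := ((pos v).2 - p.2) / ((pos v).1 - p.1).
exists (1 + \sum_(v : V) `|bad v|) => v pv.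
have hb : bad v <= \sum_(u : V) `|bad u|.
  rewrite (bigD1 v) //= (le_trans (ler_norm _)) // lerDl sumr_ge0 // => u _.
have sg : 0 <= \sum_(u : V) `|bad u| by rewrite sumr_ge0.
rewrite /hh; apply/negP => /eqP h.
case: (eqVneq ((pos v).1 - p.1) 0) => d.
  move: h; rewrite d mulr0 subr0 => /eqP; rewrite subr_eq0 => /eqP e2.
  move/eqP: d; rewrite subr_eq0 => /eqP e1.
  by move: pv; rewrite [pos v]surjective_pairing [p]surjective_pairing e1 e2 eqxx.
have e : (pos v).2 - p.2 = (1 + \sum_(u : V) `|bad u|) * ((pos v).1 - p.1) by lra.
have : bad v = 1 + \sum_(u : V) `|bad u| by rewrite /bad e mulfK.
lra.
Qed.

End Aux.

Lemma odd_sum_ex (I : finType) (P : pred I) (F : I -> nat) :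
  odd (\sum_(i | P i) F i) -> exists i, P i && odd (F i).
Proof.
move=> h; case: (boolP [exists i, P i && odd (F i)]) => [/fintype.existsP //|hn].
move: h; rewrite odd_sumb big1 // => i Pi; apply/negbTE/negP => oi.
by move/negP: hn; apply; apply/fintype.existsP; exists i; rewrite Pi.
Qed.

Lemma ordSS_neq n (i : 'I_n) : (2 < n)%N -> ordS (ordS i) != i.
Proof.
move=> n3; apply/negP => /eqP /(congr1 val).
rewrite -[ordS (ordS i)]/(iter 2 (@ordS n) i) iter_ordS /=.
have := ltn_ord i; move: (nat_of_ord i) => m hm.
case: (ltnP (m + 2) n) => h; first by rewrite modn_small //; lia.
rewrite -(subnK h) modnDr modn_small; lia.
Qed.

Unset Implicit Arguments.
Set Strict Implicit.
Local Open Scope classical_set_scope.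
Local Open Scope ring_scope.

Theorem mainTheorem3
  (R : realType)
  (* the domain Delta *)
  (Delta : set (pt R))
  (* the finite node set chi, indexed by the finite type V *)
  (V : finType) (pos : V -> pt R)
  (* the fence nodes, cyclically ordered *)
  (n : nat) (f : 'I_n -> V)
  (rb : R) (w : V) :
  0 < rb ->
  (* Delta is a convex compact domain *)
  convex_pl Delta -> compact Delta ->
  (* its piecewise-linear zboundary has the fence nodes as its vertices,
     in cyclic order: it is the simple closed polygon f 0, f 1, ..., f (n-1) *)
  (3 <= n)%N -> injective f ->
  bdry_set Delta = \bigcup_(i in [set: 'I_n]) pseg (pos (f i)) (pos (f (ordS i))) ->
  (forall i j : 'I_n, i != j ->
     pseg (pos (f i)) (pos (f (ordS i))) `&` pseg (pos (f j)) (pos (f (ordS j)))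
     = if j == ordS i then [set pos (f j)]
       else if i == ordS j then [set pos (f i)] else set0) ->
  (* the nodes are distinct points of Delta *)
  injective pos -> (forall v, Delta (pos v)) ->
  (* cyclically consecutive fence nodes are at distance < rb *)
  (forall i : 'I_n, eucl_dist (pos (f i)) (pos (f (ordS i))) < rb) ->
  (* w is an interior node *)
  w \notin [set f i | i : 'I_n]%SET ->
  (* hypotheses on (R, F) *)
  dSG_criterion (rips2 pos rb) (fence f) ->
  H_trivial (rips2 pos rb) 2 ->
  (dSG_criterion (delete_vertex (rips2 pos rb) w) (fence f)
   <-> H_trivial (vlink (rips2 pos rb) w) 1).
Proof.
move=> rb0 cvD cD n3 finj hB hI posinj Dpos hdist hwf hdsg hH2.
have fw : forall i, f i != w.
  move=> i; apply/negP => /eqP e.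
  have : f i \in [set f j | j : 'I_n]%SET by apply/imsetP; exists i.
  by rewrite e (negbTE hwf).
have Fw : forall e : {set V}, e \in fence f -> w \notin e.
  move=> e; rewrite /fence inE => /orP [] /imsetP [i _ ->]; rewrite !inE.
    by rewrite eq_sym fw.
  by rewrite negb_or !(eq_sym w) !fw.
split; last first.
  move=> hL; case: hdsg => c [hrel hnb]; exists c; split => //.
  have cw := link_dir (@rips_sub _ _ pos rb) (@rips3 _ _ pos rb) Fw
     (proj1 (andP hrel)) (proj2 (andP hrel)) hL.
  case/andP: hrel => /andP [/fintype.subsetP cK c3] hF.
  apply/andP; split => //; apply/andP; split => //.
  by apply/fintype.subsetP => s sc; rewrite inE cK // cw.
case=> c [/andP [/andP [/fintype.subsetP cRw /forallP c3] hFB] hnb]; exfalso.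
have cK : forall s, s \in c -> s \in rips2 pos rb /\ w \notin s.
  by move=> s /cRw; rewrite inE => /andP [].
have c3' : forall T, T \in c -> #|T| = 3%N.
  by move=> T Tc; apply/eqP; move: (c3 T); rewrite Tc.
have B0 : bd 2 c != finset.set0.
  apply/negP => /eqP B0; apply: hnb; exists finset.set0; split; last by rewrite bd0 B0.
  apply/andP; split; first exact: finset.sub0set.
  by apply/forallP => s; rewrite inE.
have hBe : forall e, e \in bd 2 c -> exists i, e = [set f i; f (ordS i)]%SET.
  case/andP: hFB => /fintype.subsetP BF /forallP B2 e eB.
  move: (B2 e) (BF e eB); rewrite eB /= /fence inE => /eqP e2 /orP [] /imsetP [i _ ei].
    by move: e2; rewrite ei cards1.
  by exists i.
have allE := fence_all finj hBe B0 (fun v => bd_vertex_even v c3').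
pose p := pos w.
pose N (T : {set V}) (q : pt R) := forall v, v \in T -> d2 q (pos v) < rb ^+ 2.
have T_near : forall T, T \in c -> N T p -> False.
  move=> T Tc hT; case: (cK T Tc) => TK wT.
  apply: (no_clique4 rb0 hH2 TK (c3' T Tc) wT) => v vT; rewrite distE //; exact: hT.
have Nlin : forall T q1 q2 l, 0 <= l <= 1 -> N T q1 -> N T q2 -> N T (lincomb q1 q2 l).
  by move=> T q1 q2 l l01 h1 h2 v vT; apply: d2_lin => //; [apply: h1 | apply: h2].
have Nvert : forall T y, T \in c -> y \in T -> N T (pos y).
  move=> T y Tc yT v vT; case: (cK T Tc) => /ripsP [_ _ hd] _.
  by rewrite -distE //; apply: hd.
case: (pselect (exists i, pseg (pos (f i)) (pos (f (ordS i))) p)) => [[i [l [l01 pe]]]|nseg].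
  have := allE i; rewrite inE => /andP [_ /odd_gt0 /card_gt0P [T]].
  rewrite !inE => /and3P [Tc _ /fintype.subsetP sT].
  apply: (T_near T Tc); rewrite pe; apply: Nlin => //; apply: Nvert => //; apply: sT;
    by rewrite !inE eqxx ?orbT.
case: (generic_t pos p) => t ht.
have hnz : forall v, v != w -> hh p t (pos v) != 0.
  by move=> v vw; apply: ht; apply/negP => /eqP /posinj /eqP; rewrite (negbTE vw).
have hfnz : forall i, hh p t (pos (f i)) != 0 by move=> i; apply: hnz.
case: (@fence_cross _ Delta n (fun i => pos (f i)) p t cvD cD hB hI (Dpos w) _ hfnz).
  by move=> i hi; apply: nseg; exists i.
move=> i0 hi0.
have BE : bd 2 c = [set [set f i; f (ordS i)]%SET | i : 'I_n]%SET.
  apply/setP => e; apply/idP/imsetP; first by case/hBe => i ->; exists i.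
  by case=> i _ ->; apply: allE.
have sumB : odd (\sum_(e in bd 2 c) crS pos p t e).
  rewrite BE big_imset /=; last first.
    move=> i j _ _ eij.
    have fi : f i \in [set f j; f (ordS j)]%SET by rewrite -eij !inE eqxx.
    have fsi : f (ordS i) \in [set f j; f (ordS j)]%SET by rewrite -eij !inE eqxx orbT.
    move: fi fsi; rewrite !inE => /orP [] /eqP /finj e1 /orP [] /eqP /finj e2.
    - exact: e1.
    - exact: e1.
    - by move: (ordSS_neq j n3); rewrite -e1 e2 eqxx.
    - exact: ordS_inj.
  rewrite (eq_bigr (fun i => (cr p t (pos (f i)) (pos (f (ordS i))) : nat))); last first.
    by move=> i _; rewrite crS2.
  rewrite (bigD1 i0) //= big1 ?addn0; first by rewrite hi0 eqxx.
  by move=> i /negbTE ne; rewrite hi0 ne.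
rewrite -dc in sumB.
case: (odd_sum_ex sumB) => T /andP [/andP [Tc _] hT].
case: (card3P (c3' T Tc)) => a [b [x [ab ax bx eT]]].
have wT : w \notin T by case: (cK T Tc).
have aT : a \in T by rewrite eT !inE eqxx.
have bT : b \in T by rewrite eT !inE eqxx orbT.
have xT : x \in T by rewrite eT !inE eqxx !orbT.
have nw : forall y, y \in T -> y != w by move=> y yT; apply/negP => /eqP e; rewrite -e yT in wT.
move: hT; rewrite eT sum_two_sub // !crS2 => hT.
apply: (T_near T Tc).
apply: (tri_near (N := N T) (Nlin T) (Nvert T a Tc aT) (Nvert T b Tc bT) (Nvert T x Tc xT)
   (hnz a (nw a aT)) (hnz b (nw b bT)) (hnz x (nw x xT)) hT).
Qed.
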